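(* Let $\lambda>0$ and $\Delta\ge1$, and define $y_1=1$ and $y_k=(1+\lambda\Delta y_{k-1})^{-1}$ for $k\geq 2$. Then $\lim_{k\to \infty} y_k= \frac{2}{1+\sqrt{1+4\lambda\Delta}}$. Moreover, defining $\underline{h}(\epsilon,\Delta) = \sup\{h:\ |y_{h}-y_{h-1}|\geq \epsilon\}$, we have $$\lim_{\Delta\to \infty}\frac{1}{\sqrt{\Delta}}\lim_{\epsilon\to 0}\frac{\underline{h}(\epsilon,\Delta)}{\log(1/\epsilon)} = \sqrt{\lambda}.$$ *)

(* Defs.v *)
From Stdlib Require Import Reals Lra Lia.
From Coquelicot Require Import Coquelicot.
Open Scope R_scope.

(* The sequence y_k of the paper: y_1 = 1, y_k = (1 + lam*D*y_{k-1})^{-1}, k >= 2.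
   Index 0 is junk (set to 1) and never used by the statement. *)
Fixpoint yseq (lam D : R) (k : nat) : R :=
  match k with
  | O => 1
  | S k' => match k' with
            | O => 1
            | S _ => / (1 + lam * D * yseq lam D k')
            end
  end.

(* underline{h}(eps, D) = sup { h >= 2 : |y_h - y_{h-1}| >= eps }, as a real
   (the set is a finite set of naturals for eps > 0; [real] sends the
   degenerate values -oo / +oo to 0, irrelevant for the limits eps -> 0+). *)
Definition hlow (lam D eps : R) : R :=
  real (Lub_Rbar (fun x : R => exists h : nat,
          x = INR h /\ (2 <= h)%nat /\
          Rabs (yseq lam D h - yseq lam D (h - 1)) >= eps)).

(* Main.v *)
Require Import Defs.
From Stdlib Require Import Reals Lra Lia Psatz.
From Coquelicot Require Import Coquelicot.
Open Scope R_scope.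

Definition ys (a : R) := 2 / (1 + sqrt (1 + 4 * a)).

Lemma ys_facts a : 0 < a -> 0 < ys a /\ ys a < 1 /\ a * ys a ^ 2 + ys a = 1.
Proof.
  intros Ha. unfold ys.
  assert (Hs : sqrt (1 + 4*a) * sqrt (1 + 4*a) = 1 + 4*a) by (apply sqrt_sqrt; lra).
  assert (H1 : 1 < sqrt (1 + 4*a)).
  { rewrite <- sqrt_1 at 1. apply sqrt_lt_1_alt; lra. }
  set (s := sqrt (1 + 4*a)) in *.
  split; [|split].
  - apply Rdiv_lt_0_compat; lra.
  - apply (Rmult_lt_reg_r (1+s)); [lra|]. unfold Rdiv. rewrite Rmult_assoc, Rinv_l; lra.
  - field_simplify; [|lra]. replace (4 * a) with (s*s - 1) by lra. field. nra.
Qed.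

Lemma y_rec lam D n : yseq lam D (S (S n)) = / (1 + lam * D * yseq lam D (S n)).
Proof. reflexivity. Qed.

Lemma y_pos lam D : 0 < lam * D -> forall n, 0 < yseq lam D n <= 1.
Proof.
  intros Ha n. induction n as [|[|n] IH]; try (simpl; lra).
  rewrite y_rec. set (x := yseq lam D (S n)) in *.
  split.
  - apply Rinv_0_lt_compat. nra.
  - rewrite <- Rinv_1. apply Rinv_le_contravar; nra.
Qed.

Lemma y_two lam D n : 0 < lam * D ->
  yseq lam D (S (S (S n))) - ys (lam*D) =
  (lam*D)^2 * ys (lam*D) ^2 * (yseq lam D (S n) - ys (lam*D)) / (1 + lam*D + lam*D*yseq lam D (S n)).
Proof.
  intros Ha. destruct (ys_facts _ Ha) as (H1 & H2 & H3).
  pose proof (y_pos lam D Ha (S n)) as Hx.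
  rewrite !y_rec.
  set (x := yseq lam D (S n)) in *. set (y := ys (lam*D)) in *. set (a := lam*D) in *.
  field_simplify; try nra.
  apply Rminus_diag_uniq. field_simplify; try nra.
  unfold Rdiv. apply Rmult_eq_0_compat_r.
  assert (E : 1 - y - a*y^2 = 0) by lra.
  replace (- a ^ 2 * x * y ^ 2 + a ^ 2 * y ^ 3 - a * x * y + a * x - a * y - y + 1)
    with (a*x*(1 - y - a*y^2) - a*y*(1 - y - a*y^2) + (1 - y - a*y^2)) by ring.
  rewrite E. ring.
Qed.

Lemma y_bound lam D : 0 < lam * D ->
  let a := lam * D in
  let rho := a^2 * ys a ^2 / (1 + a) in
  let K := Rmax (Rabs (yseq lam D 1 - ys a)) (Rabs (yseq lam D 2 - ys a)) in
  forall n, Rabs (yseq lam D (S n) - ys a) <= K * rho ^ (Nat.div2 n).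
Proof.
  intros Ha a rho K.
  assert (Ha' : 0 < a) by exact Ha.
  destruct (ys_facts _ Ha') as (H1 & H2 & H3).
  assert (Hr : 0 <= rho).
  { unfold rho. apply Rmult_le_pos; [nra|]. apply Rlt_le, Rinv_0_lt_compat. lra. }
  assert (HS : forall n, Rabs (yseq lam D (S n) - ys a) <= K * rho ^ (Nat.div2 n) /\
                        Rabs (yseq lam D (S (S n)) - ys a) <= K * rho ^ (Nat.div2 (S n))).
  { induction n as [|n IH].
    - cbn [Nat.div2 pow]. rewrite !Rmult_1_r. split; [apply Rmax_l | apply Rmax_r].
    - split; [apply IH|]. destruct IH as [IH1 _].
      change (Nat.div2 (S (S n))) with (S (Nat.div2 n)).
      unfold a. rewrite y_two by exact Ha. fold a.
      pose proof (y_pos lam D Ha (S n)) as Hx.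
      set (x := yseq lam D (S n)) in *.
      replace (a^2*ys a^2*(x-ys a)/(1+a+a*x)) with ((a^2*ys a^2/(1+a+a*x))*(x-ys a)) by (field; nra).
      rewrite Rabs_mult, (Rabs_pos_eq (_/_)).
      2:{ apply Rmult_le_pos; [nra|]. apply Rlt_le, Rinv_0_lt_compat. nra. }
      apply Rle_trans with (rho * Rabs (x - ys a)).
      + apply Rmult_le_compat_r; [apply Rabs_pos|]. unfold rho, Rdiv.
        apply Rmult_le_compat_l; [nra|]. apply Rinv_le_contravar; nra.
      + apply Rle_trans with (rho * (K * rho ^ Nat.div2 n)); [apply Rmult_le_compat_l; lra|].
        rewrite <- tech_pow_Rmult. lra. }
  intros n; apply HS.
Qed.

Lemma div2_lim : filterlim Nat.div2 eventually eventually.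
Proof.
  intros P [N HN]. exists (2*N)%nat. intros n Hn. apply HN.
  rewrite Nat.div2_div. apply Nat.div_le_lower_bound; lia.
Qed.

Lemma y_lim lam D : 0 < lam * D -> is_lim_seq (yseq lam D) (ys (lam * D)).
Proof.
  intros Ha. destruct (ys_facts _ Ha) as (H1 & H2 & H3).
  set (a := lam * D) in *.
  set (rho := a^2 * ys a ^2 / (1 + a)).
  set (K := Rmax (Rabs (yseq lam D 1 - ys a)) (Rabs (yseq lam D 2 - ys a))).
  assert (Hr0 : 0 <= rho).
  { unfold rho. apply Rmult_le_pos; [nra|]. apply Rlt_le, Rinv_0_lt_compat. lra. }
  assert (Hr1 : rho < 1).
  { unfold rho. apply (Rmult_lt_reg_r (1+a)); [lra|]. unfold Rdiv.
    rewrite Rmult_assoc, Rinv_l by lra. nra. }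
  apply is_lim_seq_incr_1.
  apply is_lim_seq_ext with (fun n => (yseq lam D (S n) - ys a) + ys a).
  { intros; ring. }
  replace (Finite (ys a)) with (Rbar_plus 0 (ys a)) by (simpl; f_equal; ring).
  apply is_lim_seq_plus'; [|apply is_lim_seq_const].
  apply is_lim_seq_abs_0.
  apply is_lim_seq_le_le with (fun _ => 0) (fun n => K * rho ^ Nat.div2 n).
  { intros n; split; [apply Rabs_pos|]. apply (y_bound lam D Ha). }
  { apply is_lim_seq_const. }
  replace (Finite 0) with (Rbar_mult K 0) by (simpl; f_equal; ring).
  apply is_lim_seq_scal_l.
  apply (filterlim_comp _ _ _ Nat.div2 (fun n => rho ^ n) _ eventually).
  - apply div2_lim.
  - apply is_lim_seq_geom. rewrite Rabs_pos_eq; lra.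
Qed.
Lemma lub_bounds (E : R -> Prop) x0 b : E x0 -> (forall x, E x -> x <= b) ->
  (forall x, E x -> x <= real (Lub_Rbar E)) /\ real (Lub_Rbar E) <= b.
Proof.
  intros H0 Hb. destruct (Lub_Rbar_correct E) as [Hub Hlub].
  assert (Hb' : is_ub_Rbar E (Finite b)) by (intros x Hx; apply Hb, Hx).
  specialize (Hlub _ Hb').
  destruct (Lub_Rbar E) as [r| |] eqn:Er.
  - split; [|exact Hlub]. intros x Hx. exact (Hub x Hx).
  - destruct Hlub.
  - destruct (Hub x0 H0).
Qed.

Definition Hset (u : nat -> R) (t : R) := fun x : R => exists n : nat, x = INR (n + 2) /\ u n <= t.

Lemma G (u : nat -> R) (l : R) : 0 < l -> is_lim_seq (fun n => u n / INR n) l ->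
  forall eta, 0 < eta -> exists M, forall t, M < t ->
    Rabs (real (Lub_Rbar (Hset u t)) / t - / l) < eta.
Proof.
  intros Hl Hlim eta Heta.
  apply is_lim_seq_Reals in Hlim.
  set (d := Rmin (l/2) (l^2*eta/4)).
  assert (Hd0 : 0 < d) by (apply Rmin_pos; [lra|]; assert (0 < l^2*eta) by (apply Rmult_lt_0_compat; [apply pow_lt|]; lra); lra).
  assert (Hd1 : d <= l/2) by apply Rmin_l.
  assert (Hd2 : d <= l^2*eta/4) by apply Rmin_r.
  destruct (Hlim d Hd0) as [N0 HN0].
  set (N := max N0 1).
  assert (HN : forall n, (N <= n)%nat -> (l - d) * INR n < u n < (l + d) * INR n).
  { intros n Hn. assert (Hn1 : 1 <= INR n) by (apply (le_INR 1); lia).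
    specialize (HN0 n ltac:(lia)). unfold Rdist in HN0.
    apply Rabs_def2 in HN0. destruct HN0 as [A B].
    assert (E : u n = (u n / INR n) * INR n) by (field; lra).
    rewrite E. split; nra. }
  assert (P1 : / (l - d) <= / l + eta / 2).
  { apply (Rmult_le_reg_l (l - d)); [lra|]. rewrite Rinv_r by lra.
    assert (E1 : l * / l = 1) by (field; lra). assert (0 < /l) by (apply Rinv_0_lt_compat; lra).
    assert (E2 : d * / l <= l * eta / 4).
    { apply Rle_trans with (l^2*eta/4 * /l); [apply Rmult_le_compat_r; lra|].
      right; field; lra. }
    assert (E3 : (l - d) * (/ l + eta / 2) = 1 - d * / l + (l - d) * eta / 2) by (field; lra).
    rewrite E3. nra. }
  assert (P2 : / l - eta / 4 <= / (l + d)).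
  { apply (Rmult_le_reg_l (l + d)); [lra|]. rewrite (Rinv_r (l+d)) by lra.
    assert (0 < /l) by (apply Rinv_0_lt_compat; lra).
    assert (E2 : d * / l <= l * eta / 4).
    { apply Rle_trans with (l^2*eta/4 * /l); [apply Rmult_le_compat_r; lra|].
      right; field; lra. }
    assert (E3 : (l + d) * (/ l - eta / 4) = 1 + d * / l - (l + d) * eta / 4) by (field; lra).
    rewrite E3. nra. }
  exists (Rmax (INR N * (l - d)) (Rmax ((l + d) * INR N) (4 / eta))).
  intros t Ht.
  assert (Ht1 : INR N * (l - d) < t) by (eapply Rle_lt_trans; [apply Rmax_l|exact Ht]).
  assert (Ht2 : (l + d) * INR N < t)
    by (eapply Rle_lt_trans; [eapply Rle_trans; [apply Rmax_l|apply Rmax_r]|exact Ht]).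
  assert (Ht3 : 4 / eta < t)
    by (eapply Rle_lt_trans; [eapply Rle_trans; [apply Rmax_r|apply Rmax_r]|exact Ht]).
  assert (Ht0 : 0 < t) by (assert (0 < 4 / eta) by (apply Rdiv_lt_0_compat; lra); lra).
  assert (Hte : 2 < t * eta / 2).
  { apply (Rmult_lt_compat_r eta) in Ht3; [|lra].
    unfold Rdiv in Ht3. rewrite Rmult_assoc, Rinv_l in Ht3 by lra. lra. }
  assert (Htd : 0 <= t / (l + d)) by (apply Rlt_le, Rdiv_lt_0_compat; lra).
  destruct (nfloor_ex _ Htd) as [n [Hn1 Hn2]].
  assert (HnN : (N <= n)%nat).
  { apply INR_le. apply (Rmult_lt_compat_r (/ (l + d))) in Ht2; [|apply Rinv_0_lt_compat; lra].
    rewrite (Rmult_comm (l+d)), Rmult_assoc, Rinv_r, Rmult_1_r in Ht2 by lra.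
    assert (INR N < INR (S n)) by (rewrite S_INR; unfold Rdiv in Hn2; lra).
    apply INR_lt in H. apply le_INR. lia. }
  assert (Hx0 : Hset u t (INR (n + 2))).
  { exists n; split; [reflexivity|]. specialize (HN n HnN).
    assert ((l + d) * INR n <= t).
    { apply (Rmult_le_compat_l (l + d)) in Hn1; [|lra].
      unfold Rdiv in Hn1. rewrite <- Rmult_assoc, (Rmult_comm _ t), Rmult_assoc, Rinv_r, Rmult_1_r in Hn1 by lra.
      exact Hn1. }
    lra. }
  assert (Hb : forall x, Hset u t x -> x <= t / (l - d) + 2).
  { intros x [m [-> Hm]]. rewrite plus_INR. simpl (INR 2).
    assert (INR m <= t / (l - d)); [|lra].
    destruct (Nat.le_gt_cases N m) as [Hm'|Hm'].
    - specialize (HN m Hm'). apply (Rmult_le_reg_l (l - d)); [lra|].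
      unfold Rdiv. rewrite (Rmult_comm t), <- Rmult_assoc, Rinv_r, Rmult_1_l by lra. lra.
    - apply lt_INR in Hm'. apply (Rmult_le_reg_l (l - d)); [lra|].
      unfold Rdiv. rewrite (Rmult_comm t), <- Rmult_assoc, Rinv_r, Rmult_1_l by lra. nra. }
  destruct (lub_bounds _ _ _ Hx0 Hb) as [Hlo Hhi].
  specialize (Hlo _ Hx0).
  set (H := real (Lub_Rbar (Hset u t))) in *.
  rewrite plus_INR in Hlo. simpl (INR 2) in Hlo.
  assert (U : H < t * (/ l + eta)).
  { assert (t / (l - d) <= t * (/ l + eta / 2)).
    { unfold Rdiv. apply Rmult_le_compat_l; lra. }
    nra. }
  assert (L : t * (/ l - eta) < H).
  { assert (t * (/ l - eta / 4) <= t / (l + d)).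
    { unfold Rdiv. apply Rmult_le_compat_l; lra. }
    assert (t / (l + d) < INR n + 1) by exact Hn2. nra. }
  apply Rabs_def1.
  - apply (Rmult_lt_reg_r t); [lra|]. unfold Rdiv. rewrite Rmult_minus_distr_r, Rmult_assoc, Rinv_l by lra. nra.
  - apply (Rmult_lt_reg_r t); [lra|]. unfold Rdiv. rewrite Rmult_minus_distr_r, Rmult_assoc, Rinv_l by lra. nra.
Qed.

Definition Dn lam D n := yseq lam D (S (S n)) - yseq lam D (S n).
Definition uu lam D n := - ln (Rabs (Dn lam D n)).

Lemma Dn_rec lam D n : 0 < lam * D ->
  Dn lam D (S n) = - (lam * D * yseq lam D (S (S (S n))) * yseq lam D (S (S n))) * Dn lam D n.
Proof.
  intros Ha. unfold Dn.
  pose proof (y_pos lam D Ha (S n)). pose proof (y_pos lam D Ha (S (S n))).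
  rewrite !y_rec. rewrite y_rec in H0.
  set (x := yseq lam D (S n)) in *.
  assert (0 < 1 + lam * D * x) by nra.
  assert (0 < / (1 + lam * D * x)) by (apply Rinv_0_lt_compat; lra).
  assert (0 < 1 + lam * D * / (1 + lam * D * x)) by nra.
  field. split; lra.
Qed.

Lemma Dn_nz lam D n : 0 < lam * D -> Dn lam D n <> 0.
Proof.
  intros Ha. induction n as [|n IH].
  - unfold Dn. rewrite y_rec. simpl. intros E.
    assert (E' : / (1 + lam * D * 1) = 1) by lra.
    assert (1 + lam * D * 1 = 1) by (rewrite <- (Rinv_inv (1 + lam*D*1)), E'; apply Rinv_1).
    lra.
  - rewrite Dn_rec by exact Ha.
    pose proof (y_pos lam D Ha (S (S (S n)))). pose proof (y_pos lam D Ha (S (S n))).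
    apply Rmult_integral_contrapositive_currified; [|exact IH].
    assert (0 < lam * D * yseq lam D (S (S (S n))) * yseq lam D (S (S n))).
    { apply Rmult_lt_0_compat; [apply Rmult_lt_0_compat|]; lra. }
    lra.
Qed.

Lemma uu_diff lam D n : 0 < lam * D ->
  uu lam D (S n) - uu lam D n = - ln (lam * D * yseq lam D (S (S (S n))) * yseq lam D (S (S n))).
Proof.
  intros Ha. unfold uu. rewrite Dn_rec by exact Ha.
  pose proof (y_pos lam D Ha (S (S (S n)))). pose proof (y_pos lam D Ha (S (S n))).
  assert (Hc : 0 < lam * D * yseq lam D (S (S (S n))) * yseq lam D (S (S n))).
  { apply Rmult_lt_0_compat; [apply Rmult_lt_0_compat|]; lra. }
  rewrite Rabs_mult, Rabs_Ropp, Rabs_pos_eq by lra.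
  rewrite ln_mult; [ring|exact Hc|]. apply Rabs_pos_lt, Dn_nz, Ha.
Qed.

Definition ell a := - ln (1 - ys a).

Lemma ell_pos a : 0 < a -> 0 < ell a.
Proof.
  intros Ha. destruct (ys_facts a Ha) as (H1 & H2 & H3). unfold ell.
  assert (ln (1 - ys a) < ln 1) by (apply ln_increasing; lra). rewrite ln_1 in H. lra.
Qed.

Lemma uu_lim lam D : 0 < lam * D ->
  is_lim_seq (fun n => uu lam D n / INR n) (ell (lam * D)).
Proof.
  intros Ha. destruct (ys_facts _ Ha) as (H1 & H2 & H3).
  assert (Hq : 0 < lam * D * ys (lam*D) ^ 2) by (apply Rmult_lt_0_compat; [lra|apply pow_lt; lra]).
  assert (HA : is_lim_seq (fun n => uu lam D (S n) - uu lam D n) (ell (lam * D))).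
  { apply is_lim_seq_ext with
      (fun n => - ln (lam * D * yseq lam D (S (S (S n))) * yseq lam D (S (S n)))).
    { intros n; rewrite uu_diff by exact Ha; reflexivity. }
    unfold ell. replace (1 - ys (lam * D)) with (lam * D * ys (lam*D) ^ 2) by lra.
    apply (is_lim_seq_opp _ (Finite (ln (lam * D * ys (lam * D) ^ 2)))).
    apply (filterlim_comp _ _ _ (fun n => lam * D * yseq lam D (S (S (S n))) * yseq lam D (S (S n))) ln
            _ (locally (lam * D * ys (lam * D) ^ 2))).
    - assert (Hy := y_lim lam D Ha).
      assert (Hy3 : is_lim_seq (fun n => yseq lam D (S (S (S n)))) (ys (lam*D))).
      { apply (is_lim_seq_incr_n _ 3) in Hy. eapply is_lim_seq_ext; [|exact Hy].
        intros n; cbv beta; rewrite Nat.add_comm; reflexivity. }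
      assert (Hy2 : is_lim_seq (fun n => yseq lam D (S (S n))) (ys (lam*D))).
      { apply (is_lim_seq_incr_n _ 2) in Hy. eapply is_lim_seq_ext; [|exact Hy].
        intros n; cbv beta; rewrite Nat.add_comm; reflexivity. }
      replace (lam * D * ys (lam * D) ^ 2) with (lam * D * ys (lam*D) * ys (lam*D)) by ring.
      apply (is_lim_seq_mult' _ _ (lam * D * ys (lam*D)) (ys (lam*D))); [|exact Hy2].
      apply is_lim_seq_scal_l with (a := lam * D) (lu := ys (lam*D)). exact Hy3.
    - apply continuous_ln. exact Hq. }
  apply is_lim_seq_Reals in HA.
  pose proof (Cesaro_1 _ _ HA) as HC.
  apply is_lim_seq_Reals in HC.
  apply is_lim_seq_ext_loc with
    (fun n => sum_f_R0 (fun n => uu lam D (S n) - uu lam D n) (pred n) / INR n + uu lam D 0 * / INR n).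
  { exists 1%nat. intros n Hn. destruct n as [|n]; [lia|]. simpl pred.
    assert (E : sum_f_R0 (fun n => uu lam D (S n) - uu lam D n) n = uu lam D (S n) - uu lam D 0).
    { clear Hn. induction n as [|n IH]; simpl; [ring|]. rewrite IH. ring. }
    rewrite E. assert (0 < INR (S n)) by (apply lt_0_INR; lia). field. lra. }
  assert (Hinv : is_lim_seq (fun n => / INR n) 0).
  { replace (Finite 0) with (Rbar_inv p_infty) by reflexivity.
    apply is_lim_seq_inv; [apply is_lim_seq_INR|discriminate]. }
  apply (is_lim_seq_scal_l _ (uu lam D 0) 0) in Hinv. simpl in Hinv. rewrite Rmult_0_r in Hinv.
  replace (ell (lam*D)) with (ell (lam*D) + 0) by ring.
  apply is_lim_seq_plus'; assumption.
Qed.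

Lemma hlow_eq lam D eps : 0 < lam * D -> 0 < eps ->
  hlow lam D eps = real (Lub_Rbar (Hset (uu lam D) (ln (/ eps)))).
Proof.
  intros Ha He. unfold hlow. f_equal. apply Lub_Rbar_eqset. intros x. split.
  - intros [h [-> [Hh Hd]]]. exists (h - 2)%nat. split; [f_equal; lia|].
    replace h with (S (S (h - 2))) in Hd by lia.
    replace (S (S (h - 2)) - 1)%nat with (S (h - 2)) in Hd by lia.
    fold (Dn lam D (h - 2)) in Hd. unfold uu. rewrite ln_Rinv by exact He.
    apply Ropp_le_contravar. apply ln_le; lra.
  - intros [n [-> Hn]]. exists (n + 2)%nat. split; [reflexivity|]. split; [lia|].
    replace (n + 2)%nat with (S (S n)) by lia.
    replace (S (S n) - 1)%nat with (S n) by lia.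
    fold (Dn lam D n). unfold uu in Hn. rewrite ln_Rinv in Hn by exact He.
    apply Rle_ge. destruct (Rle_or_lt eps (Rabs (Dn lam D n))) as [H|H]; [exact H|].
    exfalso. assert (ln (Rabs (Dn lam D n)) < ln eps).
    { apply ln_increasing; [apply Rabs_pos_lt, Dn_nz, Ha|exact H]. }
    lra.
Qed.

Lemma hlow_lim lam D : 0 < lam * D ->
  filterlim (fun eps => hlow lam D eps / ln (/ eps)) (at_right 0) (locally (/ ell (lam * D))).
Proof.
  intros Ha. apply filterlim_locally. intros e.
  destruct (G (uu lam D) (ell (lam*D)) (ell_pos _ Ha) (uu_lim lam D Ha) e (cond_pos e)) as [M HM].
  unfold at_right, within, locally.
  exists (mkposreal (exp (- Rmax M 0)) (exp_pos _)). intros y Hy Hy0.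
  change (Rabs (y + - 0) < exp (- Rmax M 0)) in Hy.
  rewrite Ropp_0, Rplus_0_r, Rabs_pos_eq in Hy by lra.
  change (Rabs (hlow lam D y / ln (/ y) + - / ell (lam * D)) < e).
  rewrite hlow_eq by assumption. apply HM.
  rewrite ln_Rinv by exact Hy0.
  assert (ln y < ln (exp (- Rmax M 0))) by (apply ln_increasing; assumption).
  rewrite ln_exp in H. pose proof (Rmax_l M 0). lra.
Qed.

Lemma ln_le_xm1 x : 0 < x -> ln x <= x - 1.
Proof.
  intros Hx. rewrite <- (ln_exp (x - 1)). apply ln_le; [exact Hx|].
  pose proof (exp_ineq1_le (x - 1)). lra.
Qed.

Lemma ell_bounds a : 0 < a -> ys a <= ell a <= ys a / (1 - ys a).
Proof.
  intros Ha. destruct (ys_facts a Ha) as (H1 & H2 & H3). unfold ell. split.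
  - pose proof (ln_le_xm1 (1 - ys a) ltac:(lra)). lra.
  - pose proof (ln_le_xm1 (/ (1 - ys a)) ltac:(apply Rinv_0_lt_compat; lra)).
    rewrite ln_Rinv in H by lra.
    replace (ys a / (1 - ys a)) with (/ (1 - ys a) - 1) by (field; lra). lra.
Qed.

Lemma g_bounds lam n : 0 < lam -> (1 <= n)%nat ->
  let r := sqrt (INR n) in let c := sqrt lam in
  r / (1 + c * r) <= r * ell (lam * INR n) /\
  (1 < 2 * c * r -> r * ell (lam * INR n) <= 2 * r / (2 * c * r - 1)).
Proof.
  intros Hl Hn r c.
  assert (Hn' : 1 <= INR n) by (apply (le_INR 1); exact Hn).
  assert (Hr : 0 < r) by (apply sqrt_lt_R0; lra).
  assert (Hc : 0 < c) by (apply sqrt_lt_R0; lra).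
  assert (Ha : 0 < lam * INR n) by nra.
  assert (Hrr : r * r = INR n) by (apply sqrt_sqrt; lra).
  assert (Hcc : c * c = lam) by (apply sqrt_sqrt; lra).
  destruct (ell_bounds _ Ha) as [E1 E2].
  destruct (ys_facts _ Ha) as (H1 & H2 & H3).
  unfold ys in *.
  assert (Hs : sqrt (1 + 4 * (lam * INR n)) * sqrt (1 + 4 * (lam * INR n)) = 1 + 4 * (lam * INR n))
    by (apply sqrt_sqrt; nra).
  assert (Hs0 : 0 <= sqrt (1 + 4 * (lam * INR n))) by apply sqrt_pos.
  set (s := sqrt (1 + 4 * (lam * INR n))) in *.
  rewrite <- Hrr, <- Hcc in Hs.
  assert (Sl : 2 * c * r <= s) by nra.
  assert (Su : s <= 1 + 2 * c * r).
  { destruct (Rle_or_lt s (1 + 2*c*r)) as [h|h]; [exact h|]. exfalso.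
    assert (0 < c * r) by nra. nra. }
  split.
  - apply Rle_trans with (r * (2 / (1 + s))); [|apply Rmult_le_compat_l; lra].
    unfold Rdiv. apply Rmult_le_compat_l; [lra|].
    replace (2 * / (1 + s)) with (/ ((1 + s) / 2)) by (field; lra).
    apply Rinv_le_contravar; lra.
  - intros Hcr. apply Rle_trans with (r * (2 / (1 + s) / (1 - 2 / (1 + s)))); [apply Rmult_le_compat_l; lra|].
    replace (r * (2 / (1 + s) / (1 - 2 / (1 + s)))) with (2 * r / (s - 1)).
    2:{ field. split; lra. }
    unfold Rdiv. apply Rmult_le_compat_l; [lra|]. apply Rinv_le_contravar; lra.
Qed.

Lemma L_lim lam : 0 < lam ->
  is_lim_seq (fun Delta => / sqrt (INR Delta) * / ell (lam * INR Delta)) (sqrt lam).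
Proof.
  intros Hl.
  set (c := sqrt lam).
  assert (Hc : 0 < c) by (apply sqrt_lt_R0; lra).
  assert (Hr : is_lim_seq (fun n => sqrt (INR n)) p_infty).
  { apply (filterlim_comp _ _ _ INR sqrt eventually (Rbar_locally' p_infty)).
    exact is_lim_seq_INR. exact filterlim_sqrt_p. }
  assert (Hv : is_lim_seq (fun n => / sqrt (INR n)) 0).
  { replace (Finite 0) with (Rbar_inv p_infty) by reflexivity.
    apply is_lim_seq_inv; [exact Hr|discriminate]. }
  assert (Hg : is_lim_seq (fun n => sqrt (INR n) * ell (lam * INR n)) (/ c)).
  { apply is_lim_seq_le_le_loc with (fun n => / (/ sqrt (INR n) + c)) (fun n => / (c - / sqrt (INR n) / 2)).
    - destruct (Hr (fun x => / c < x)) as [N HN]. { exists (/ c). tauto. }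
      exists (max N 1). intros n Hn.
      destruct (g_bounds lam n Hl ltac:(lia)) as [B1 B2].
      fold c in B1, B2. set (r := sqrt (INR n)) in *.
      assert (Hrn : / c < r) by (apply HN; lia).
      assert (Hr0 : 0 < r) by (apply Rlt_trans with (/ c); [apply Rinv_0_lt_compat|]; lra).
      assert (Hcr : 1 < c * r).
      { apply (Rmult_lt_compat_l c) in Hrn; [|lra]. rewrite Rinv_r in Hrn by lra. exact Hrn. }
      split.
      + replace (/ (/ r + c)) with (r / (1 + c * r)) by (field; split; nra). exact B1.
      + replace (/ (c - / r / 2)) with (2 * r / (2 * c * r - 1)) by (field; split; nra).
        apply B2. lra.
    - assert (h : is_lim_seq (fun n => / sqrt (INR n) + c) (0 + c)).
      { apply is_lim_seq_plus'; [exact Hv|apply is_lim_seq_const]. }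
      rewrite Rplus_0_l in h.
      apply is_lim_seq_inv in h; [exact h|]. intros E; injection E; lra.
    - assert (h : is_lim_seq (fun n => c - / sqrt (INR n) / 2) (c - 0)).
      { apply is_lim_seq_minus'; [apply is_lim_seq_const|].
        apply is_lim_seq_ext with (fun n => / 2 * / sqrt (INR n)).
        { intros; unfold Rdiv; ring. }
        replace 0 with (/ 2 * 0) by ring.
        apply (is_lim_seq_scal_l _ (/ 2) 0). exact Hv. }
      rewrite Rminus_0_r in h.
      apply is_lim_seq_inv in h; [exact h|]. intros E; injection E; lra. }
  apply is_lim_seq_ext with (fun n => / (sqrt (INR n) * ell (lam * INR n))).
  { intros n. rewrite Rinv_mult. reflexivity. }
  apply is_lim_seq_inv in Hg; [|intros E; injection E; apply Rinv_neq_0_compat; lra].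
  simpl in Hg. rewrite Rinv_inv in Hg. exact Hg.
Qed.

Theorem lemma3 (lam : R) (Hlam : 0 < lam) :
  (forall Delta : nat, (1 <= Delta)%nat ->
     is_lim_seq (fun k => yseq lam (INR Delta) k)
                (2 / (1 + sqrt (1 + 4 * lam * INR Delta)))) /\
  exists L : nat -> R,
    (forall Delta : nat, (1 <= Delta)%nat ->
       filterlim (fun eps => hlow lam (INR Delta) eps / ln (/ eps))
                 (at_right 0) (locally (L Delta))) /\
    is_lim_seq (fun Delta => / sqrt (INR Delta) * L Delta) (sqrt lam).
Proof.
  split.
  - intros Delta HD.
    assert (Ha : 0 < lam * INR Delta) by (apply Rmult_lt_0_compat; [lra|apply lt_0_INR; lia]).
    rewrite Rmult_assoc. exact (y_lim lam (INR Delta) Ha).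
  - exists (fun Delta => / ell (lam * INR Delta)). split.
    + intros Delta HD.
      assert (Ha : 0 < lam * INR Delta) by (apply Rmult_lt_0_compat; [lra|apply lt_0_INR; lia]).
      exact (hlow_lim lam (INR Delta) Ha).
    + exact (L_lim lam Hlam).
Qed.
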